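(* Let $M$ be a complete pointed metric space and $Y$ a real Banach space. If $f \in \mathrm{Lip}_0(M,Y)$ attains its norm toward some vector (i.e. $f \in \mathrm{A}(M,Y)$), then the associated operator $T_f \in \mathcal{L}(\mathcal{F}(M),Y)$ quasi attains its norm (i.e. $T_f \in \mathrm{QNA}(\mathcal{F}(M),Y)$).
   Context: Throughout, metric spaces are complete and pointed, with base point $0$; $Y$ is a real Banach space. $\mathrm{Lip}_0(M,Y)$ is the Banach space of Lipschitz maps $f:M\to Y$ with $f(0)=0$, normed by $\|f\| = \sup_{p\neq q} \|f(p)-f(q)\|/d(p,q)$. A map $f\in \mathrm{Lip}_0(M,Y)$ attains its norm toward $y\in Y$ if there is a sequence $(p_n,q_n)$ in $M\times M$ with $p_n\neq q_n$ such that $[f(p_n)-f(q_n)]/d(p_n,q_n)\to y$ and $\|y\|=\|f\|$; $\mathrm{A}(M,Y)$ is the set of $f$ that attain their norm toward some $y\in Y$. The Lipschitz-free space $\mathcal{F}(M)$ is the closed linear span of the evaluations $\delta(x)$ ($\delta(x)(g)=g(x)$) in $\mathrm{Lip}_0(M,\mathbb{R})^*$; each $f\in\mathrm{Lip}_0(M,Y)$ corresponds to the unique $T_f\in\mathcal{L}(\mathcal{F}(M),Y)$ with $T_f(\delta(x))=f(x)$, and $\|T_f\|=\|f\|$. For Banach spaces $X,Y$, an operator $T\in\mathcal{L}(X,Y)$ quasi attains its norm, written $T\in\mathrm{QNA}(X,Y)$, if there exist a sequence $(x_n)\subset B_X$ and $y_0\in Y$ with $Tx_n\to y_0$ and $\|y_0\|=\|T\|$.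 *)

(* Defs.v *)
From HB Require Import structures.
From mathcomp Require Import all_boot all_order all_algebra.
From mathcomp Require Import all_classical all_reals all_analysis.
Set Implicit Arguments. Unset Strict Implicit. Unset Printing Implicit Defensive.
Import Order.TTheory GRing.Theory Num.Theory.
Import numFieldNormedType.Exports.
Local Open Scope classical_set_scope.
Local Open Scope ring_scope.

Section Defs.
Variables (R : realType) (M : Type) (d : M -> M -> R) (x0 : M).

Definition is_metric : Prop :=
  (forall p q, 0 <= d p q) /\ (forall p q, d p q = 0 <-> p = q) /\
  (forall p q, d p q = d q p) /\ (forall p q r, d p r <= d p q + d q r).

Definition metric_complete : Prop :=
  forall u : nat -> M,
    (forall e : R, 0 < e -> exists N : nat, forall m n, (N <= m)%N -> (N <= n)%N ->
        d (u m) (u n) < e) ->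
    exists l : M, forall e : R, 0 < e -> exists N : nat, forall n, (N <= n)%N -> d (u n) l < e.

Variable (Y : normedModType R).

Definition Lip0 (f : M -> Y) : Prop :=
  f x0 = 0 /\ exists L : R, forall p q, `|f p - f q| <= L * d p q.

Definition lipnorm (f : M -> Y) : R :=
  sup [set r | exists p q, p <> q /\ r = `|f p - f q| / d p q].

Definition attains_toward (f : M -> Y) (y : Y) : Prop :=
  exists p q : nat -> M, (forall n, p n <> q n) /\
    (fun n => (d (p n) (q n))^-1 *: (f (p n) - f (q n))) @ \oo --> y /\
    `|y| = lipnorm f.

Definition attains (f : M -> Y) : Prop := exists y : Y, attains_toward f y.
End Defs.

Section Free.
Variables (R : realType) (M : Type) (d : M -> M -> R) (x0 : M).

(* Elements of Lip_0(M,R)^* are represented as functionals on M -> R;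
   only their values on Lip_0(M,R) are relevant. *)
Definition functional := (M -> R) -> R.

Definition lip1 (g : M -> R) : Prop :=
  g x0 = 0 /\ forall p q, `|g p - g q| <= d p q.

Definition delta (x : M) : functional := fun g => g x.

Definition comb (s : seq (R * M)) : functional :=
  fun g => \sum_(c <- s) c.1 * g c.2.

Definition linear_on_Lip0 (phi : functional) : Prop :=
  forall (g h : M -> R) (a b : R), Lip0 d x0 g -> Lip0 d x0 h ->
    phi (fun x => a * g x + b * h x) = a * phi g + b * phi h.

(* phi belongs to F(M): a linear functional on Lip_0(M,R) lying in the
   dual-norm closure of span{delta(x)} *)
Definition inFree (phi : functional) : Prop :=
  linear_on_Lip0 phi /\
  forall e : R, 0 < e -> exists s : seq (R * M),
    forall g, lip1 g -> `|phi g - comb s g| <= e.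

Definition in_dual_ball (phi : functional) : Prop :=
  forall g, lip1 g -> `|phi g| <= 1.

Variable (Y : normedModType R).

Definition bounded_linear_on_Free (T : functional -> Y) : Prop :=
  (forall (phi psi : functional) (a b : R), inFree phi -> inFree psi ->
     T (fun g => a * phi g + b * psi g) = a *: T phi + b *: T psi) /\
  exists C : R, forall phi, inFree phi -> in_dual_ball phi -> `|T phi| <= C.

Definition is_Tf (f : M -> Y) (T : functional -> Y) : Prop :=
  bounded_linear_on_Free T /\ forall x, T (delta x) = f x.

Definition opnorm_Free (T : functional -> Y) : R :=
  sup [set r | exists phi, inFree phi /\ in_dual_ball phi /\ r = `|T phi|].

Definition QNA_Free (T : functional -> Y) : Prop :=
  exists (mu : nat -> functional) (y0 : Y),
    (forall n, inFree (mu n) /\ in_dual_ball (mu n)) /\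
    (fun n => T (mu n)) @ \oo --> y0 /\ `|y0| = opnorm_Free T.
End Free.

(* Main.v *)
Require Import Defs.
From HB Require Import structures.
From mathcomp Require Import all_boot all_order all_algebra.
From mathcomp Require Import all_classical all_reals all_analysis.
Import Order.TTheory GRing.Theory Num.Theory.
Import numFieldNormedType.Exports.
Local Open Scope ring_scope.
From mathcomp Require Import ring lra.

Module Aux.
Set Implicit Arguments. Unset Strict Implicit.
Local Open Scope classical_set_scope.
Section HB.
Variables (R : realType) (Y : normedModType R).

Definition subsp (W : set Y) := W 0 /\ forall (a : R) x y, W x -> W y -> W (a *: x + y).
Definition linW (W : set Y) (phi : Y -> R) :=
  forall (a : R) x y, W x -> W y -> phi (a *: x + y) = a * phi x + phi y.
Definition domW (W : set Y) (phi : Y -> R) := forall x, W x -> phi x <= `|x|.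

Lemma linW0 W phi : subsp W -> linW W phi -> phi 0 = 0.
Proof.
move=> [W0 _] L; have := L 1 0 0 W0 W0.
rewrite scale1r addr0 mul1r -{1}[phi 0]addr0 => /addrI <-//.
Qed.

Lemma linWZ W phi a x : subsp W -> linW W phi -> W x -> phi (a *: x) = a * phi x.
Proof.
move=> sW L Wx; have := L a x 0 Wx sW.1; rewrite !addr0 => ->.
by rewrite (linW0 sW L) addr0.
Qed.

Lemma subspZ W a x : subsp W -> W x -> W (a *: x).
Proof. by move=> sW Wx; rewrite -[_ *: x]addr0; apply: sW.2 => //; exact: sW.1. Qed.
Lemma subspD W x y : subsp W -> W x -> W y -> W (x + y).
Proof. by move=> sW Wx Wy; rewrite -[x]scale1r; apply: sW.2. Qed.
Lemma subspB W x y : subsp W -> W x -> W y -> W (x - y).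
Proof. by move=> sW Wx Wy; rewrite -scaleN1r; apply: subspD => //; exact: subspZ. Qed.

Definition ext (W : set Y) (u : Y) : set Y :=
  [set y | exists w t, W w /\ y = w + t *: u].

Lemma ext_subsp W u : subsp W -> subsp (ext W u).
Proof.
move=> [W0 Wl]; split; first by exists 0, 0; rewrite scale0r addr0.
move=> a x y [w1 [t1 [W1 ->]]] [w2 [t2 [W2 ->]]].
exists (a *: w1 + w2), (a * t1 + t2); split; first exact: Wl.
by rewrite scalerDr scalerDl scalerA addrACA.
Qed.

Lemma ext_in W u w : W w -> ext W u w.
Proof. by move=> Ww; exists w, 0; rewrite scale0r addr0. Qed.

Lemma ext_u W u : subsp W -> ext W u u.
Proof. by move=> [W0 _]; exists 0, 1; rewrite scale1r add0r. Qed.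

Lemma hb_step_c W phi u c : subsp W -> linW W phi -> domW W phi -> ~ W u ->
  (forall w, W w -> phi w - `|w - u| <= c) ->
  (forall w, W w -> c <= `|w + u| - phi w) ->
  exists phi', linW (ext W u) phi' /\ domW (ext W u) phi' /\
     forall w t, W w -> phi' (w + t *: u) = phi w + t * c.
Proof.
move=> sW L D Wu Hlo Hhi.
pose P y := [set wt : Y * R | W wt.1 /\ y = wt.1 + wt.2 *: u].
have uniq w t : W w -> forall wt, P (w + t *: u) wt -> wt = (w, t).
  move=> Ww [w' t'] [/= Ww' E].
  have Ht : t' = t.
    apply/eqP; apply: contraPP Wu => /negP Hne.
    have : W ((t' - t)^-1 *: (w - w')).
      by apply: subspZ => //; exact: subspB.
    have -> : w - w' = (t' - t) *: u.
      rewrite scalerBl; apply/eqP; rewrite subr_eq.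
      by rewrite [X in _ == X]addrC addrA -E addrK.
    by rewrite scalerA mulVf ?scale1r ?subr_eq0 // => H1 H2; exact: H2 H1.
  rewrite {}Ht in E *; congr pair; apply: (addIr (t *: u)); by rewrite E.
pose phi' y := let wt := xget (0, 0) (P y) in phi wt.1 + wt.2 * c.
have phiE w t : W w -> phi' (w + t *: u) = phi w + t * c.
  move=> Ww; rewrite /phi' (xget_unique _ (_ : P (w + t *: u) (w, t))) //.
  exact: uniq.
exists phi'; split; last split; last by [].
- move=> a x y [w1 [t1 [W1 ->]]] [w2 [t2 [W2 ->]]].
  have -> : a *: (w1 + t1 *: u) + (w2 + t2 *: u) = (a *: w1 + w2) + (a * t1 + t2) *: u.
    by rewrite scalerDr scalerDl scalerA addrACA.
  rewrite !phiE //; last exact: sW.2.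
  by rewrite L // mulrDr mulrDl !mulrA; ring.
- move=> y [w [t [Ww ->]]]; rewrite phiE //.
  have [t0|t0|->] := ltgtP t 0; last by rewrite mul0r addr0 scale0r addr0; exact: D.
  + have Ws : W ((- t)^-1 *: w) by exact: subspZ.
    have := Hlo _ Ws; rewrite (linWZ _ sW L Ww).
    have nt : 0 < - t by rewrite oppr_gt0.
    move=> H; have := ler_wpM2l (ltW nt) H.
    rewrite mulrBr mulrA mulfV ?gt_eqF // mul1r.
    have -> : (- t) * `|(- t)^-1 *: w - u| = `|w + t *: u|.
      rewrite -[X in X * _]gtr0_norm // -normrZ scalerBr scalerA mulfV ?gt_eqF //.
      by rewrite scale1r scaleNr opprK.
    move=> H2; lra.
  + have Ws : W (t^-1 *: w) by exact: subspZ.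
    have := Hhi _ Ws; rewrite (linWZ _ sW L Ww).
    move=> H; have := ler_wpM2l (ltW t0) H.
    rewrite mulrBr mulrA mulfV ?gt_eqF // mul1r.
    have -> : t * `|t^-1 *: w + u| = `|w + t *: u|.
      rewrite -[X in X * _]gtr0_norm // -normrZ scalerDr scalerA mulfV ?gt_eqF //.
      by rewrite scale1r.
    move=> H2; lra.
Qed.

Lemma ext_sub W u : subsp W -> W u -> ext W u `<=` W.
Proof. by move=> sW Wu y [w [t [Ww ->]]]; apply: subspD => //; exact: subspZ. Qed.

Lemma hb_step W phi u : subsp W -> linW W phi -> domW W phi ->
  exists phi', linW (ext W u) phi' /\ domW (ext W u) phi' /\
     forall w, W w -> phi' w = phi w.
Proof.
move=> sW L D.
have [Wu|Wu] := pselect (W u).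
  exists phi; split; last split; last by [].
  - by move=> a x y /(ext_sub sW Wu) Wx /(ext_sub sW Wu) Wy; exact: L.
  - by move=> x /(ext_sub sW Wu); exact: D.
pose A := [set r | exists w, W w /\ r = phi w - `|w - u|].
have key w w' : W w -> W w' -> phi w - `|w - u| <= `|w' + u| - phi w'.
  move=> Ww Ww'.
  have := D _ (subspD sW Ww Ww'); rewrite -[w + w']/(w + w').
  have -> : phi (w + w') = phi w + phi w'.
    by rewrite -[w]scale1r L // mul1r scale1r.
  have := ler_normD (w - u) (w' + u).
  have -> : w - u + (w' + u) = w + w' by rewrite addrACA addNr addr0.
  move=> H1 H2; lra.
have hA : has_sup A.
  split; first by exists (phi 0 - `|0 - u|), 0; split => //; exact: sW.1.
  exists (`|0 + u| - phi 0) => r [w [Ww ->]]; apply: key => //; exact: sW.1.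
have lo w : W w -> phi w - `|w - u| <= sup A.
  by move=> Ww; apply: sup_upper_bound hA _ _; exists w.
have hi w : W w -> sup A <= `|w + u| - phi w.
  by move=> Ww; apply: ge_sup hA.1 _ => r [w' [Ww' ->]]; exact: key.
have [phi' [L' [D' E']]] := hb_step_c sW L D Wu lo hi.
exists phi'; split => //; split => //.
by move=> w Ww; have := E' w 0 Ww; rewrite scale0r addr0 mul0r addr0.
Qed.

Lemma hb_list (v : Y) (us : seq Y) : v != 0 -> exists W phi,
  subsp W /\ linW W phi /\ domW W phi /\ W v /\ phi v = `|v| /\
  forall u, List.In u us -> W u.
Proof.
move=> v0; elim: us => [|u us [W [phi [sW [L [D [Wv [pv Wus]]]]]]]].
  pose W0 : set Y := [set 0].
  have sW0 : subsp W0.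
    by split => // a x y -> ->; rewrite scaler0 addr0.
  have L0 : linW W0 (fun _ => 0) by move=> *; rewrite mulr0 addr0.
  have D0 : domW W0 (fun _ => 0) by move=> *.
  have nv : ~ W0 v by move=> /eqP; rewrite (negbTE v0).
  have [phi' [L' [D' E']]] := hb_step_c (c := `|v|) sW0 L0 D0 nv
    (fun w (e : w = 0) => ltac:(rewrite e /= !add0r normrN; have := normr_ge0 v; lra))
    (fun w (e : w = 0) => ltac:(rewrite e /= add0r subr0; lra)).
  exists (ext W0 v), phi'; split; first exact: ext_subsp.
  split => //; split => //; split; first exact: ext_u.
  split; last by [].
  by have := E' 0 1 (erefl : W0 0); rewrite add0r scale1r mul1r add0r.
have [phi' [L' [D' E']]] := hb_step u sW L D.
exists (ext W u), phi'; split; first exact: ext_subsp.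
split => //; split => //; split; first exact: ext_in.
split; first by rewrite E'.
move=> x [<-|/Wus Wx]; first exact: ext_u.
exact: ext_in.
Qed.
End HB.
Section Main.
Variables (R : realType) (M : Type) (d : M -> M -> R) (x0 : M).
Variables (Y : normedModType R) (f : M -> Y).
Hypothesis metric : is_metric d.
Hypothesis fx0 : f x0 = 0.
Variable L : R.
Hypothesis Lf : forall p q, `|f p - f q| <= L * d p q.
Hypothesis L0 : 0 <= L.

Let d_ge0 p q : 0 <= d p q. Proof. by case: metric. Qed.
Let d_sym p q : d p q = d q p. Proof. by case: metric => _ [_ []]. Qed.
Let d_tri p q r : d p r <= d p q + d q r. Proof. by case: metric => _ [_ [_]]. Qed.
Let d_refl p : d p p = 0. Proof. by case: metric => _ [H _]; apply/H. Qed.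

Section McShane.
Variables (h : M -> R) (zs : seq M).
Definition mcs x := foldr (fun z acc => Num.min (h z + d x z) acc) (h x0 + d x x0) zs.

Lemma mcs_le x z : List.In z (x0 :: zs) -> mcs x <= h z + d x z.
Proof.
rewrite /mcs; move: z; elim: zs => [|z' zs' IH] z; first by move=> [->|[]].
move=> /= [<-|[<-|H]]; rewrite ge_min.
- by apply/orP; right; apply: IH; left.
- by apply/orP; left.
- by apply/orP; right; apply: IH; right.
Qed.

Lemma mcs_ge x B : (forall z, List.In z (x0 :: zs) -> B <= h z + d x z) -> B <= mcs x.
Proof.
rewrite /mcs; elim: zs => [|z' zs' IH] H; first by apply: H; left.
rewrite /= le_min; apply/andP; split; first by apply: H; right; left.
by apply: IH => z [<-|Hz]; apply: H; [left|right; right].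
Qed.

Lemma mcs_lip1 p q : mcs p - mcs q <= d p q.
Proof.
suff : mcs p - d p q <= mcs q by lra.
apply: mcs_ge => z Hz.
have := mcs_le p Hz; have := d_tri p q z; rewrite (d_sym p q); lra.
Qed.

Lemma mcs_lip p q : `|mcs p - mcs q| <= d p q.
Proof.
rewrite ler_norml mcs_lip1 andbT lerNl opprB d_sym; exact: mcs_lip1.
Qed.

Hypothesis hlip : forall z z', List.In z (x0 :: zs) -> List.In z' (x0 :: zs) -> h z - h z' <= d z z'.

Lemma mcs_eq z : List.In z (x0 :: zs) -> mcs z = h z.
Proof.
move=> Hz; apply/eqP; rewrite eq_le; apply/andP; split.
  by have := mcs_le z Hz; rewrite d_refl addr0.
apply: mcs_ge => z' Hz'; have := hlip Hz Hz'; lra.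
Qed.
End McShane.

Lemma key_bound (s : seq (R * M)) K :
  (forall g, lip1 d x0 g -> `|comb s g| <= K) ->
  `|\sum_(c <- s) c.1 *: f c.2| <= L * K.
Proof.
move=> HK.
have K0 : 0 <= K.
  apply: le_trans (HK (fun _ => 0) _); first exact: normr_ge0.
  by split => // p q; rewrite subrr normr0.
set v := \sum_(c <- s) c.1 *: f c.2.
have [->|v0] := eqVneq v 0; first by rewrite normr0 mulr_ge0.
have [LL|Lpos] := eqVneq L 0.
  suff e : v = 0 by move: v0; rewrite e eqxx.
  rewrite /v big1 // => c _.
  have := Lf c.2 x0; rewrite LL mul0r fx0 subr0 normr_le0 => /eqP ->.
  by rewrite scaler0.
have Lp : 0 < L by rewrite lt_def Lpos L0.
have [W [phi [sW [LW [DW [Wv [pv Wus]]]]]]] := hb_list (map (f \o snd) s) v0.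
have Wf z : List.In z (x0 :: map snd s) -> W (f z).
  move=> [<-|Hz]; first by rewrite fx0; exact: sW.1.
  move/List.in_map_iff: Hz => [c [<- Hc]]; apply: Wus.
  exact: (List.in_map (f \o snd) s c Hc).
pose h z := phi (f z) / L.
have hlip z z' : List.In z (x0 :: map snd s) -> List.In z' (x0 :: map snd s) -> h z - h z' <= d z z'.
  move=> Hz Hz'; rewrite /h -mulrBl ler_pdivrMr // mulrC.
  have -> : phi (f z) - phi (f z') = phi (f z - f z').
    have -> : f z - f z' = (-1) *: f z' + f z by rewrite scaleN1r addrC.
    by rewrite (LW _ _ _ (Wf _ Hz') (Wf _ Hz)); ring.
  apply: (le_trans _ (Lf z z')).
  exact: DW (subspB sW (Wf _ Hz) (Wf _ Hz')).
pose g := mcs h (map snd s).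
have lg : lip1 d x0 g.
  split; last exact: mcs_lip.
  rewrite /g mcs_eq //; last by left.
  by rewrite /h fx0 (linW0 sW LW) mul0r.
have sumphi (s' : seq (R * M)) : (forall c, List.In c s' -> W (f c.2)) ->
    W (\sum_(c <- s') c.1 *: f c.2) /\
    phi (\sum_(c <- s') c.1 *: f c.2) = \sum_(c <- s') c.1 * phi (f c.2).
  elim: s' => [|c s' IH] Hs; first by rewrite !big_nil (linW0 sW LW); split => //; exact: sW.1.
  have [W1 P1] := IH (fun c' Hc' => Hs c' (or_intror Hc')).
  have Wc : W (f c.2) by apply: Hs; left.
  rewrite !big_cons; split; first exact: sW.2.
  by rewrite LW // P1.
have inS c : List.In c s -> List.In c.2 (x0 :: map snd s).
  by move=> Hc; right; exact: List.in_map.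
have [_ Pv] := sumphi s (fun c Hc => Wf _ (inS c Hc)).
have gen (s' : seq (R * M)) : (forall c, List.In c s' -> List.In c s) ->
    \sum_(c <- s') c.1 * g c.2 = \sum_(c <- s') c.1 * phi (f c.2) / L.
  elim: s' => [|c s' IH] Hs; first by rewrite !big_nil.
  rewrite !big_cons IH; last by move=> c' Hc'; apply: Hs; right.
  have Hc : List.In c s by apply: Hs; left.
  by rewrite /g (mcs_eq hlip (inS _ Hc)) /h mulrA.
have : comb s g = `|v| / L.
  by rewrite /comb (gen s (fun c H => H)) -pv /v Pv mulr_suml.
move=> Hc; have := HK g lg; rewrite Hc ger0_norm ?divr_ge0 // ler_pdivrMr //.
by rewrite mulrC.
Qed.
End Main.

Section FreeLemmas.
Variables (R : realType) (M : Type) (d : M -> M -> R) (x0 : M).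

Lemma inFree_delta x : inFree d x0 (delta x).
Proof.
split; first by move=> g h a b _ _.
move=> e e0; exists [:: (1, x)] => g _.
by rewrite /comb big_seq1 /delta /= mul1r subrr normr0 ltW.
Qed.

Lemma inFree_comb (s : seq (R * M)) : inFree d x0 (comb s).
Proof.
split.
  move=> g h a b _ _; rewrite /comb !mulr_sumr -big_split; apply: eq_bigr => c _ /=.
  ring.
by move=> e e0; exists s => g _; rewrite subrr normr0 ltW.
Qed.

Lemma comb_lin (a b : R) (s1 s2 : seq (R * M)) (g : M -> R) :
  comb ([seq (a * c.1, c.2) | c <- s1] ++ [seq (b * c.1, c.2) | c <- s2]) g =
  a * comb s1 g + b * comb s2 g.
Proof. by rewrite /comb big_cat !big_map !mulr_sumr; congr (_ + _); apply: eq_bigr => c _ /=; rewrite mulrA. Qed.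

Lemma inFree_lin (phi psi : functional R M) (a b : R) : inFree d x0 phi -> inFree d x0 psi ->
  inFree d x0 (fun g => a * phi g + b * psi g).
Proof.
move=> [Lp Ap] [Lq Aq]; split.
  move=> g h a' b' Hg Hh; rewrite Lp // Lq //; ring.
move=> e e0.
have k0 : 0 < `|a| + `|b| + 1 by rewrite ltr_wpDl ?addr_ge0.
have e'0 : 0 < e / (`|a| + `|b| + 1) by rewrite divr_gt0.
have [s1 H1] := Ap _ e'0; have [s2 H2] := Aq _ e'0.
exists ([seq (a * c.1, c.2) | c <- s1] ++ [seq (b * c.1, c.2) | c <- s2]) => g lg.
rewrite comb_lin.
have -> : a * phi g + b * psi g - (a * comb s1 g + b * comb s2 g) =
  a * (phi g - comb s1 g) + b * (psi g - comb s2 g) by ring.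
apply: le_trans (ler_normD _ _) _; rewrite !normrM.
have := H1 g lg; have := H2 g lg.
set e' := e / _; move=> h2 h1.
have : `|a| * `|phi g - comb s1 g| + `|b| * `|psi g - comb s2 g| <= (`|a| + `|b|) * e'.
  rewrite mulrDl; apply: lerD; apply: ler_wpM2l => //.
move=> h3; apply: le_trans h3 _.
have : e' * (`|a| + `|b| + 1) = e by rewrite /e' mulfVK ?gt_eqF.
have := ltW e'0; have := normr_ge0 a; have := normr_ge0 b; rewrite -/e'.
nra.
Qed.

Variables (Y : normedModType R) (f : M -> Y) (T : functional R M -> Y).
Hypothesis hT : is_Tf d x0 f T.

Lemma T_lin (phi psi : functional R M) (a b : R) : inFree d x0 phi -> inFree d x0 psi ->
  T (fun g => a * phi g + b * psi g) = a *: T phi + b *: T psi.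
Proof. by case: hT => [[H _] _]; exact: H. Qed.

Lemma T_delta x : T (delta x) = f x.
Proof. by case: hT. Qed.

Lemma T_comb (s : seq (R * M)) : T (comb s) = \sum_(c <- s) c.1 *: f c.2.
Proof.
elim: s => [|c s IH].
  have -> : comb (R:=R) (M:=M) [::] = fun g => 0 * delta x0 g + 0 * delta x0 g.
    apply: boolp.functional_extensionality_dep => g.
    by rewrite /comb big_nil !mul0r addr0.
  by rewrite (T_lin _ _ (inFree_delta x0) (inFree_delta x0)) !scale0r addr0 big_nil.
have -> : comb (c :: s) = fun g => c.1 * delta c.2 g + 1 * comb s g.
  apply: boolp.functional_extensionality_dep => g.
  by rewrite /comb big_cons mul1r.
by rewrite (T_lin _ _ (inFree_delta _) (inFree_comb s)) T_delta IH scale1r big_cons.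
Qed.

Variable L : R.
Hypothesis Lf : forall p q, `|f p - f q| <= L * d p q.
Hypothesis L0 : 0 <= L.
Hypothesis metric : is_metric d.
Hypothesis fx0 : f x0 = 0.

Lemma T_bound (phi : functional R M) : inFree d x0 phi -> in_dual_ball d x0 phi -> `|T phi| <= L.
Proof.
move=> Fp Bp.
have [C HC] : exists C, forall phi, inFree d x0 phi -> in_dual_ball d x0 phi -> `|T phi| <= C.
  by case: hT => [[_ H] _].
have C0 : 0 <= C.
  apply: le_trans (HC (delta x0) (inFree_delta x0) _); first exact: normr_ge0.
  by move=> g [g0 _]; rewrite /delta g0 normr0.
apply/ler_addgt0Pr => e e0.
have k0 : 0 < L + C + 1 by rewrite ltr_wpDl ?addr_ge0.
have e'0 : 0 < e / (L + C + 1) by rewrite divr_gt0.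
set e' := e / _ in e'0.
have [s Hs] := Fp.2 _ e'0.
pose psi := fun g => 1 * phi g + (-1) * comb s g.
have Fpsi : inFree d x0 psi by apply: inFree_lin => //; exact: inFree_comb.
have Tpsi : T psi = T phi - T (comb s).
  by rewrite /psi (T_lin _ _ Fp (inFree_comb s)) scale1r scaleN1r.
have psie g : lip1 d x0 g -> `|psi g| <= e'.
  by move=> lg; rewrite /psi mul1r mulN1r; exact: Hs.
have bpsi : `|T psi| <= C * e'.
  pose psi' := fun g => e'^-1 * psi g + 0 * psi g.
  have : `|T psi'| <= C.
    apply: HC; first exact: inFree_lin.
    move=> g lg; rewrite /psi' mul0r addr0 normrM gtr0_norm ?invr_gt0 //.
    by rewrite ler_pdivrMl // mulr1; exact: psie.
  rewrite /psi' (T_lin _ _ Fpsi Fpsi) scale0r addr0 normrZ gtr0_norm ?invr_gt0 //.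
  by rewrite ler_pdivrMl // mulrC.
have bcomb : `|T (comb s)| <= L * (1 + e').
  rewrite T_comb; apply: (key_bound metric fx0 Lf L0) => g lg.
  have := Hs g lg; have := Bp g lg.
  have := ler_normD (phi g) (comb s g - phi g).
  rewrite addrC subrK => h1 h2 h3.
  by apply: le_trans h1 _; rewrite distrC; apply: lerD.
have -> : T phi = T (comb s) + T psi by rewrite Tpsi addrC subrK.
apply: le_trans (ler_normD _ _) _.
have : e' * (L + C + 1) = e by rewrite /e' mulfVK ?gt_eqF.
move: bpsi bcomb; have := ltW e'0; nra.
Qed.
End FreeLemmas.
End Aux.
Import Aux.

Theorem lemma2p1 (R : realType) (M : Type) (d : M -> M -> R) (x0 : M)
  (Y : completeNormedModType R) (f : M -> Y) (T : functional R M -> Y) :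
  is_metric d -> metric_complete d ->
  Lip0 d x0 f -> attains d f ->
  is_Tf d x0 f T ->
  QNA_Free d x0 T.
Proof.
move=> met _ [fx0 [L' HL']] [y [p [q [pq [cv ny]]]]] hT.
have [dge0 [deq _]] := met.
have dpos a b : a <> b -> 0 < d a b.
  move=> ab; rewrite lt_def dge0 andbT; apply/eqP => /deq; exact: ab.
set L := lipnorm d f.
pose LS := [set r | exists a b, a <> b /\ r = `|f a - f b| / d a b]%classic.
have hLS : has_sup LS.
  split; first by exists (`|f (p 0%N) - f (q 0%N)| / d (p 0%N) (q 0%N)), (p 0%N), (q 0%N).
  exists L' => r [a [b [ab ->]]]; rewrite ler_pdivrMr //; exact: dpos.
have Lf a b : `|f a - f b| <= L * d a b.
  have [ab|ab] := pselect (a = b).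
    by rewrite ab subrr normr0 (proj2 (deq b b) erefl) mulr0.
  have := sup_upper_bound hLS (ex_intro _ a (ex_intro _ b (conj ab erefl))).
  by rewrite -/(lipnorm d f) -/L ler_pdivrMr //; exact: dpos.
have L0 : 0 <= L by rewrite /L -ny normr_ge0.
pose mu a b : functional R M :=
  fun g => (d a b)^-1 * delta a g + (- (d a b)^-1) * delta b g.
have Fmu a b : inFree d x0 (mu a b) by exact: inFree_lin (inFree_delta _ _ _) (inFree_delta _ _ _).
have Bmu a b : a <> b -> in_dual_ball d x0 (mu a b).
  move=> ab g lg; rewrite /mu /delta mulNr -mulrBr normrM gtr0_norm ?invr_gt0 ?dpos //.
  by rewrite ler_pdivrMl ?dpos // mulr1; exact: lg.2.
have Tmu a b : T (mu a b) = (d a b)^-1 *: (f a - f b).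
  rewrite /mu (T_lin hT _ _ (inFree_delta d x0 a) (inFree_delta d x0 b)).
  by rewrite !(T_delta hT) scaleNr scalerBr.
pose S := [set r | exists phi, inFree d x0 phi /\ in_dual_ball d x0 phi /\ r = `|T phi|]%classic.
have hS : has_sup S.
  split; first by exists `|T (mu (p 0%N) (q 0%N))|, (mu (p 0%N) (q 0%N)); split => //; split => //; exact: Bmu.
  by exists L => r [phi [Fp [Bp ->]]]; exact: (T_bound hT Lf L0 met fx0 Fp Bp).
exists (fun n => mu (p n) (q n)), y; split; first by move=> n; split => //; exact: Bmu.
split.
  have -> : (fun n => T (mu (p n) (q n))) = (fun n => (d (p n) (q n))^-1 *: (f (p n) - f (q n))).
    by apply: funext => n; rewrite Tmu.
  exact: cv.
rewrite ny; apply/eqP; rewrite eq_le; apply/andP; split.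
  apply: ge_sup hLS.1 _ => r [a [b [ab ->]]].
  apply: sup_upper_bound hS _ _; exists (mu a b); split => //; split; first exact: Bmu.
  by rewrite Tmu normrZ gtr0_norm ?invr_gt0 ?dpos // mulrC.
apply: ge_sup hS.1 _ => r [phi [Fp [Bp ->]]].
exact: (T_bound hT Lf L0 met fx0 Fp Bp).
Qed.
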